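(* For each positive integer $m$, with $L=\tfrac13(4^m-1)$, there are infinitely many indices $i\ge0$ such that $c_i=c_{i+1}=\cdots=c_{i+L-1}=0$. In particular, the sequence $(c_n)_{n\ge0}$ contains arbitrarily long blocks of consecutive $0$'s.
   Context: For $n\in\mathbb{N}$ let $s_2(n)$ be the sum of the binary digits of $n$ and $t_n=s_2(n)\bmod 2$ (the Prouhet–Thue–Morse sequence). Let $F(X)=\sum_{n\ge1}t_nX^n\in\mathbb{F}_2[[X]]$ and let $G(X)=\sum_{n\ge1}c_nX^n\in\mathbb{F}_2[[X]]$ be its compositional inverse, i.e. $F(G(X))=G(F(X))=X$; set $c_0=0$. The $c_n$ are identified with integers in $\{0,1\}$. *)

(* Defs.v *)
From HB Require Import structures.
From mathcomp Require Import all_boot all_algebra.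
Set Implicit Arguments. Unset Strict Implicit. Unset Printing Implicit Defensive.
Import GRing.Theory.
Local Open Scope ring_scope.

(* s_2(n): sum of binary digits of n (fuel n suffices since n %/ 2 < n for n > 0) *)
Fixpoint s2_aux (fuel n : nat) : nat :=
  if fuel is f.+1 then ((n %% 2) + s2_aux f (n %/ 2))%N else 0%N.
Definition s2 (n : nat) : nat := s2_aux n n.

Definition tm (n : nat) : 'F_2 := (s2 n %% 2)%:R.

Definition pseries := nat -> 'F_2.

Definition F_tm : pseries := fun n => if n == 0%N then 0 else tm n.

Definition ps_one : pseries := fun n => (n == 0%N)%:R.
Definition ps_X : pseries := fun n => (n == 1%N)%:R.
Definition ps_mul (a b : pseries) : pseries :=
  fun n => \sum_(i < n.+1) a i * b (n - i)%N.
Definition ps_pow (a : pseries) (k : nat) : pseries := iter k (ps_mul a) ps_one.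
(* composition f(g(X)), meaningful when g has zero constant term:
   the coefficient of X^n only involves g^k for k <= n *)
Definition ps_comp (f g : pseries) : pseries :=
  fun n => \sum_(k < n.+1) f k * ps_pow g k n.

Definition is_comp_inverse (f g : pseries) : Prop :=
  g 0%N = 0 /\ (forall n, ps_comp f g n = ps_X n) /\ (forall n, ps_comp g f n = ps_X n).

(* Main.v *)
Require Import Defs.
From mathcomp Require Import all_boot all_algebra.
From mathcomp Require Import ring zify.
Import GRing.Theory.
Local Open Scope ring_scope.

Lemma s2_aux0 f : s2_aux f 0 = 0%N.
Proof. by elim: f => //= f ->. Qed.

Lemma s2_aux_stable f g n : (n <= f)%N -> (n <= g)%N -> s2_aux f n = s2_aux g n.
Proof.
elim: f g n => [|f IH] g n.
  move=> H0 _; have -> : n = 0%N by lia.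
  by rewrite !s2_aux0.
case: n => [|n] Hf Hg; first by rewrite !s2_aux0.
case: g Hg => [//|g] Hg /=.
congr (_ + _)%N; apply: IH; lia.
Qed.

Lemma s2_even n : s2 (n.*2) = s2 n.
Proof.
case: n => [//|n]; rewrite /s2.
have -> : (n.+1.*2 = (n.*2.+1).+1)%N by lia.
rewrite /=.
have -> : (n.*2.+2 %% 2 = 0)%N by lia.
have -> : (n.*2.+2 %/ 2 = n.+1)%N by lia.
rewrite add0n; congr (_ + _)%N; apply: s2_aux_stable; lia.
Qed.

Lemma s2_odd n : s2 (n.*2.+1) = (s2 n).+1.
Proof.
rewrite /s2 /=.
have -> : (n.*2.+1 %% 2 = 1)%N by lia.
have -> : (n.*2.+1 %/ 2 = n)%N by lia.
rewrite add1n; congr S; apply: s2_aux_stable; lia.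
Qed.

Lemma two0F : (2%:R : 'F_2) = 0.
Proof. by apply/val_inj. Qed.
Lemma two0 : (2%:R : {poly 'F_2}) = 0.
Proof. by rewrite -polyC_natr two0F polyC0. Qed.
Lemma F2x (a : 'F_2) : a = 0 \/ a = 1.
Proof. case: a => [[|[|]]] //= ?; [left|right]; exact/val_inj. Qed.

Lemma natF2 (x : nat) : ((x %% 2)%:R : 'F_2) = x%:R.
Proof.
rewrite {2}(divn_eq x 2) natrD natrM two0F mulr0 add0r //.
Qed.

Lemma tmE n : tm n = (s2 n)%:R.
Proof. by rewrite /tm natF2. Qed.

Lemma tm_even n : tm n.*2 = tm n.
Proof. by rewrite !tmE s2_even. Qed.

Lemma tm_odd n : tm n.*2.+1 = 1 + tm n.
Proof. by rewrite !tmE s2_odd -[(s2 n).+1]add1n natrD. Qed.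

Lemma F_tmE n : F_tm n = tm n.
Proof. by rewrite /F_tm; case: n. Qed.

Definition tr (n : nat) (a : pseries) : {poly 'F_2} := \poly_(i < n.+1) a i.

Lemma coef_tr n a i : (tr n a)`_i = if (i <= n)%N then a i else 0.
Proof. by rewrite coef_poly ltnS. Qed.

Lemma tr_mul n a b i : (i <= n)%N -> ps_mul a b i = (tr n a * tr n b)`_i.
Proof.
move=> Hi; rewrite coefM /ps_mul; apply: eq_bigr => j _.
have Hj := ltn_ord j.
rewrite !coef_tr ifT ?ifT //; lia.
Qed.

Lemma tr_pow n g k i : (i <= n)%N -> ps_pow g k i = ((tr n g)^+k)`_i.
Proof.
elim: k i => [|k IH] i Hi; first by rewrite expr0 coef1.
rewrite exprS /ps_pow iterS -/(ps_pow g k) coefM /ps_mul.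
apply: eq_bigr => j _; have Hj := ltn_ord j.
rewrite coef_tr ifT; last lia.
rewrite IH //; lia.
Qed.

Lemma trX n g : g 0%N = 0 -> tr n g = 'X * \poly_(i < n) g i.+1.
Proof.
move=> g0; apply/polyP => i; rewrite coefXM coef_tr coef_poly.
case: i => [|i] /=; first by rewrite g0.
by [].
Qed.

Lemma tr_pow0 n g k i : g 0%N = 0 -> (i < k)%N -> ((tr n g)^+k)`_i = 0.
Proof.
move=> g0 Hik; rewrite trX // exprMn coefXnM ifT //.
Qed.

Lemma tr_comp n f g k : g 0%N = 0 -> (k <= n)%N ->
  ps_comp f g k = ((tr n f) \Po (tr n g))`_k.
Proof.
move=> g0 Hk.
rewrite [tr n f]/tr poly_def linear_sum /= coef_sum.
under eq_bigr => i _ do rewrite linearZ /= rmorphXn /= comp_polyX coefZ -/(tr n g).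
rewrite /ps_comp.
rewrite -(big_mkord xpredT (fun i => f i * ps_pow g i k)).
rewrite -(big_mkord xpredT (fun i => f i * ((tr n g)^+i)`_k)).
rewrite [RHS](@big_cat_nat _ _ _ k.+1) //= ?ltnS //.
rewrite [X in _ + X]big1_seq ?addr0; last first.
  move=> i /andP [_]; rewrite mem_iota => /andP [H1 _].
  by rewrite tr_pow0 ?mulr0.
apply: eq_big_nat => i /andP [_ Hi].
by rewrite (tr_pow n) //; lia.
Qed.

Lemma frob (p q : {poly 'F_2}) : (p + q)^+2 = p^+2 + q^+2.
Proof.
have -> : (p+q)^+2 = p^+2 + q^+2 + 2%:R * (p*q) by ring.
by rewrite two0 mul0r addr0.
Qed.

Lemma sqrF2 (c : 'F_2) : c ^+ 2 = c.
Proof. by case: (F2x c) => ->; rewrite ?expr0n ?expr1n. Qed.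

Lemma sqr_comp (p : {poly 'F_2}) : p^+2 = p \Po 'X^2.
Proof.
elim/poly_ind: p => [|q c IH]; first by rewrite comp_poly0 expr0n.
rewrite frob exprMn comp_polyD comp_polyM comp_polyX comp_polyC -IH.
by rewrite -rmorphXn /= sqrF2.
Qed.

Lemma F2add_self (a : 'F_2) : a + a = 0.
Proof. by case: (F2x a) => ->; [rewrite addr0 | apply/val_inj]. Qed.

Definition Fn n := tr n F_tm.

Lemma coefFn n i : (i <= n)%N -> (Fn n)`_i = tm i.
Proof. by move=> H; rewrite coef_tr H F_tmE. Qed.

Lemma coefG n i : (i <= n)%N -> (Fn n \Po 'X^2)`_i = if odd i then 0 else tm i./2.
Proof.
move=> H; rewrite coef_comp_poly_Xn // dvdn2 divn2; case: (odd i) => //=.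
rewrite coefFn //; lia.
Qed.


Lemma rel_coef n k : (k <= n)%N ->
  (Fn n + 'X^2 * Fn n + (Fn n \Po 'X^2) + 'X^1 * (Fn n \Po 'X^2) + 'X^2 * (Fn n \Po 'X^2)
    + 'X^3 * (Fn n \Po 'X^2) + 'X^1)`_k = 0.
Proof.
move=> Hk; rewrite !coefD !coefXnM coefXn.
case: k Hk => [|[|[|j]]] Hk /=.
- rewrite coefFn // coefG //. by apply/val_inj.
- rewrite coefFn // !coefG //; try lia. by apply/val_inj.
- rewrite !coefFn ?coefG //; try lia. by apply/val_inj.
have -> : (j.+3 - 2 = j.+1)%N by lia.
have -> : (j.+3 - 1 = j.+2)%N by lia.
have -> : (j.+3 - 3 = j)%N by lia.
rewrite !coefFn ?coefG ?addr0; try lia.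
rewrite -[j]odd_double_half; case: (odd j) => /=; rewrite ?odd_double /= ?doubleK ?uphalf_double ?add1n ?add0n; set m := j./2.
- rewrite (tm_even m.+2 : tm m.*2.+4 = _) (tm_even m.+1 : tm m.*2.+2 = _).
  move: (tm m.+2) (tm m.+1) => a b.
  by case: (F2x a) => ->; case: (F2x b) => ->; apply/val_inj.
- rewrite (tm_odd m.+1 : tm m.*2.+3 = _) (tm_odd m : tm m.*2.+1 = _).
  move: (tm m) (tm m.+1) => a b.
  by case: (F2x a) => ->; case: (F2x b) => ->; apply/val_inj.
Qed.


Lemma dvdXnP k (p : {poly 'F_2}) : (forall i, (i < k)%N -> p`_i = 0) -> 'X^k %| p.
Proof.
move=> H; rewrite -(poly_take_drop k p).
have -> : take_poly k p = 0.
  by apply/polyP => i; rewrite coef_take_poly coef0; case: ifP => // /H.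
by rewrite add0r dvdp_mull.
Qed.

Lemma dvdXn_coef k (p : {poly 'F_2}) i : 'X^k %| p -> (i < k)%N -> p`_i = 0.
Proof. by case/dvdpP => q -> Hi; rewrite coefMXn Hi. Qed.

Lemma dvdXn_le k l (p : {poly 'F_2}) : (k <= l)%N -> 'X^l %| p -> 'X^k %| p.
Proof. move=> Hkl Hl; apply: dvdXnP => i Hi; apply: (@dvdXn_coef l p i Hl); lia. Qed.

Lemma relF n : 'X^(n.+1) %| (1 + 'X)^+2 * Fn n + (1 + 'X)^+3 * (Fn n)^+2 + 'X.
Proof.
apply: dvdXnP => i Hi.
set F := Fn n.
have -> : (1 + 'X)^+2 * F + (1 + 'X)^+3 * F^+2 + 'X =
   (F + 'X^2 * F + (F \Po 'X^2) + 'X^1 * (F \Po 'X^2) + 'X^2 * (F \Po 'X^2)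
    + 'X^3 * (F \Po 'X^2) + 'X^1) + 2%:R * ('X * F + 'X * F^+2 + 'X^2 * F^+2).
  rewrite -sqr_comp; ring.
by rewrite two0 mul0r addr0 rel_coef.
Qed.

Lemma dvd_comp k (A q r : {poly 'F_2}) : q = 'X * r -> 'X^k %| A -> 'X^k %| A \Po q.
Proof.
move=> -> /dvdpP [s ->].
rewrite comp_polyM rmorphXn /= comp_polyX exprMn mulrA mulrAC dvdp_mull //.
Qed.

Definition E (G : {poly 'F_2}) := (1 + G)^+3 * 'X^2 + (1 + G)^+2 * 'X + G.

Lemma E_diff a b : E a - E b = (a - b) * (1 + 'X * ('X * ((1+a)^+2 + (1+a)*(1+b) + (1+b)^+2) + (2%:R + a + b))).
Proof. rewrite /E; ring. Qed.

Lemma E_uniq k a b : 'X^k %| E a -> 'X^k %| E b -> 'X^k %| a - b.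
Proof.
move=> Ha Hb.
have : 'X^k %| E a - E b by rewrite dvdp_sub.
rewrite E_diff Gauss_dvdpl //.
apply: coprimep_expl; rewrite coprimep_sym coprimepX.
by rewrite /root !hornerE oner_neq0.
Qed.

Lemma Ec (c : pseries) : is_comp_inverse F_tm c -> forall n, 'X^(n.+1) %| E (tr n c).
Proof.
case=> [c0 [H1 _]] n.
set cn := tr n c. set Y := Fn n \Po cn.
have hc : cn = 'X * \poly_(i<n) c i.+1 := trX n c c0.
have HY : 'X^(n.+1) %| Y - 'X.
  apply: dvdXnP => i Hi; rewrite coefB /Y /Fn -tr_comp //.
  by rewrite H1 /ps_X coefX subrr.
have HR := @dvd_comp _ _ _ _ hc (relF n).
rewrite !(rmorphD, rmorphM, rmorphXn, rmorph1) /= comp_polyX -/Y in HR.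
have -> : E cn = ((1 + cn) ^+ 2 * Y + (1 + cn) ^+ 3 * Y ^+ 2 + cn)
   - (Y - 'X) * ((1+cn)^+2 + (1+cn)^+3 * (Y + 'X)) by rewrite /E; ring.
by rewrite dvdp_sub // dvdp_mulr.
Qed.


Definition Mj (j : nat) : nat := (2 * 4 ^ j.+1)%N.

Fixpoint wj (j : nat) : {poly 'F_2} :=
  if j is j'.+1 then wj j' * (1 + 'X^(Mj j')) + 'X^((Mj j').-1) else 0.

Fixpoint Sj (j : nat) : nat := if j is j'.+1 then (Sj j' + Mj j')%N else 0%N.

Lemma Mj_pos j : (0 < Mj j)%N.
Proof. by rewrite /Mj muln_gt0 expn_gt0. Qed.

Lemma MjS j : Mj j.+1 = (4 * Mj j)%N.
Proof. rewrite /Mj expnS; lia. Qed.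

Lemma Sj_Mj j : (3 * Sj j + 8 = Mj j)%N.
Proof. elim: j => [//|j IH] /=; rewrite MjS; lia. Qed.

Lemma frob1 (a : {poly 'F_2}) : (1 + a)^+2 = 1 + a^+2.
Proof. by rewrite frob expr1n. Qed.

Lemma frob4 (a : {poly 'F_2}) : (1 + a)^+4 = 1 + a^+4.
Proof. by rewrite (exprM _ 2 2) frob1 frob1 -exprM. Qed.

Lemma frob8 (a : {poly 'F_2}) : (1 + a)^+8 = 1 + a^+8.
Proof. by rewrite (exprM _ 4 2) frob4 frob1 -exprM. Qed.

Lemma u_rel j : (1 + 'X)^+8 * (1 + 'X * wj j)^+3 = 1 + 'X^(Mj j).
Proof.
elim: j => [|j IH] /=.
  by rewrite mulr0 addr0 expr1n mulr1 frob8.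
have -> : 1 + 'X * (wj j * (1 + 'X^(Mj j)) + 'X^((Mj j).-1)) =
   (1 + 'X * wj j) * (1 + 'X^(Mj j)).
  have -> : 'X^(Mj j) = 'X * 'X^((Mj j).-1) :> {poly 'F_2}.
    by rewrite -exprS prednK // Mj_pos.
  ring.
rewrite exprMn mulrA IH -exprS frob4 -exprM MjS mulnC.
by [].
Qed.

Definition dj j : {poly 'F_2} := (1 + 'X)^+3 * wj j + 'X + 'X^2.

Lemma E_d j : 'X * E (dj j) = (1 + 'X) * 'X^(Mj j).
Proof.
rewrite -[X in _ = _ * X](addrK 1) [_ + 1]addrC -u_rel.
rewrite /E /dj; set w := wj j.
match goal with |- ?L = ?R => have H : L = R + 2%:R * (-4%:R * 'X^1 * w^+0 - 1%:R * 'X^1 * w^+1 - 17%:R * 'X^2 * w^+0 - 11%:R * 'X^2 * w^+1 - 1%:R * 'X^2 * w^+2 - 40%:R * 'X^3 * w^+0 - 47%:R * 'X^3 * w^+1 - 9%:R * 'X^3 * w^+2 - 60%:R * 'X^4 * w^+0 - 111%:R * 'X^4 * w^+1 - 36%:R * 'X^4 * w^+2 - 59%:R * 'X^5 * w^+0 - 164%:R * 'X^5 * w^+1 - 83%:R * 'X^5 * w^+2 - 38%:R * 'X^6 * w^+0 - 158%:R * 'X^6 * w^+1 - 120%:R * 'X^6 * w^+2 - 15%:R * 'X^7 * w^+0 - 98%:R * 'X^7 * w^+1 - 111%:R * 'X^7 * w^+2 - 3%:R * 'X^8 * w^+0 - 36%:R * 'X^8 * w^+1 - 64%:R * 'X^8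 * w^+2 - 6%:R * 'X^9 * w^+1 - 21%:R * 'X^9 * w^+2 - 3%:R * 'X^10 * w^+2) by ring end.
by rewrite H two0 mul0r addr0.
Qed.

Lemma dvd_Ed j : 'X^((Mj j).-1) %| E (dj j).
Proof.
have HM : 'X^(Mj j) = 'X * 'X^((Mj j).-1) :> {poly 'F_2}.
  by rewrite -exprS prednK // Mj_pos.
have H := E_d j; rewrite HM mulrCA in H.
have HX : ('X : {poly 'F_2}) != 0 by rewrite polyX_eq0.
move/(mulfI HX) : H => ->.
exact: dvdp_mull.
Qed.

Lemma size_wj j : (size (wj j) <= Sj j)%N.
Proof.
elim: j => [|j IH] /=; first by rewrite size_poly0.
apply: leq_trans (size_add _ _) _; rewrite geq_max; apply/andP; split.
  apply: leq_trans (size_mul_leq _ _) _.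
  have : (size ((1 + 'X^(Mj j))%R : {poly 'F_2}) <= (Mj j).+1)%N.
    apply: leq_trans (size_add _ _) _; rewrite size_poly1 size_polyXn; lia.
  move=> H; rewrite -subn1 leq_subLR add1n -addnS; exact: leq_add IH H.
rewrite size_polyXn prednK ?Mj_pos //; lia.
Qed.

Lemma coef_dj j i : (Sj j + 3 <= i)%N -> (dj j)`_i = 0.
Proof.
move=> Hi; rewrite /dj !coefD coefX coefXn.
have -> : (i == 1%N) = false by lia.
have -> : (i == 2%N) = false by lia.
rewrite !addr0 nth_default //.
apply: leq_trans (size_mul_leq _ _) _.
have H1 : (size ((1 + 'X)%R : {poly 'F_2}) <= 2)%N.
  apply: leq_trans (size_add _ _) _; rewrite size_poly1 size_polyX //.
have H3 := size_poly_exp_leq ((1 + 'X)%R : {poly 'F_2}) 3.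
have := size_wj j; rewrite -!subn1; lia.
Qed.

Lemma block (c : pseries) : is_comp_inverse F_tm c ->
  forall j i, (Sj j + 3 <= i)%N -> (i < (Mj j).-1)%N -> c i = 0.
Proof.
move=> Hc j i H1 H2.
have Hcn := @Ec c Hc (Mj j).
have Hcn' : 'X^((Mj j).-1) %| E (tr (Mj j) c) by apply: dvdXn_le Hcn; lia.
have H := @E_uniq _ _ _ Hcn' (dvd_Ed j).
have := @dvdXn_coef _ _ i H H2.
rewrite coefB coef_tr coef_dj // subr0; case: ifP => //; lia.
Qed.

Lemma pow4_ge n : (3 * n + 1 <= 4 ^ n)%N.
Proof. elim: n => [//|n IH]; rewrite expnS; lia. Qed.


Theorem mainTheorem8 (c : nat -> 'F_2) :
  is_comp_inverse F_tm c ->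
  (forall m : nat, (0 < m)%N ->
     forall N : nat, exists i : nat, (N <= i)%N /\
       forall j : nat, (j < (4 ^ m - 1) %/ 3)%N -> c (i + j)%N = 0)
  /\
  (forall len : nat, exists i : nat, forall j : nat, (j < len)%N -> c (i + j)%N = 0).
Proof.
move=> Hc.
have P1 : forall m : nat, (0 < m)%N ->
     forall N : nat, exists i : nat, (N <= i)%N /\
       forall j : nat, (j < (4 ^ m - 1) %/ 3)%N -> c (i + j)%N = 0.
  move=> m _ N.
  pose j := (4^m + N + 10)%N.
  have Hj : (j.+1 < 4 ^ j.+1)%N by apply: ltn_expl.
  have HM : Mj j = (2 * 4 ^ j.+1)%N by [].
  have HS := Sj_Mj j.
  exists ((Mj j).-1 - (4 ^ m - 1) %/ 3)%N; split; first lia.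
  move=> k Hk; apply: (@block c Hc j); lia.
split => // len.
have [i [_ Hi]] := P1 len.+1 isT 0%N.
exists i => k Hk; apply: Hi; have := pow4_ge len.+1; lia.
Qed.
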